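(* Let $G$ be an $(N,k)$ Adinkra with associated doubly even code $C$. For a closed walk in $G$, let $w\in\mathbb{Z}_2^N$ be the vector with $w_i=1$ exactly for those colors $i$ traversed an odd number of times. Then the nonzero codewords of $C$ correspond exactly to the closed walks of $G$ in which at least one edge color appears an odd number of times: for every such closed walk $w\in C\setminus\{0\}$, and every nonzero $c\in C$ arises as $w$ for some such closed walk.
   Context: An Adinkra of dimension $N$ is a finite connected simple graph $G=(V,E)$ with: a bipartition of $V$ into bosons and fermions (every edge joins a boson and a fermion); a height function $\mathrm{hgt}:V\to\mathbb{Z}$ with adjacent vertices at heights differing by $1$; a coloring of $E$ by colors $\{1,\dots,N\}$ such that each vertex is incident to exactly one edge of each color; an edge parity $\pi:E\to\mathbb{Z}_2$ (parity $1$ = dashed); such that every path with edge colors $(i,j)$, $i\ne j$, lies in a unique 4-cycle with colors $(i,j,i,j)$, each having an odd number of dashed edges. If $|V|=2^{N-k}$, $G$ is an $(N,k)$ Adinkra. A doubly even $(N,k)$ code is a $k$-dimensional subspace of $\mathbb{Z}_2^N$ all of whose elements have Hamming weight $\equiv0\pmod4$. Labeling the vertices of an $N$-cube Adinkra by $\mathbb{Z}_2^N$ so that color-$i$ edges join $v$ and $v+e_i$, the $(N,k)$ Adinkra $G$ is (up to switching, relabeling vertices and changing heights) obtained by identifying vertices whose labels differ by elements of a doubly even $(N,k)$ code $C$; this $C$ is the associated code of $G$. *)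

(* Defs.v *)
From HB Require Import structures.
From mathcomp Require Import all_boot all_order all_algebra .
Set Implicit Arguments. Unset Strict Implicit. Unset Printing Implicit Defensive.
Import Order.TTheory GRing.Theory Num.Theory.
Local Open Scope ring_scope.

(* Vectors of Z_2^N are row vectors 'rV['F_2]_N;
   a linear code is the row space of a square matrix C : 'M['F_2]_N. *)

Definition wt N (c : 'rV['F_2]_N) : nat := #|[set i : 'I_N | c ord0 i != 0%R]|.

Definition doubly_even N (C : 'M['F_2]_N) : Prop :=
  forall c : 'rV['F_2]_N, (c <= C)%MS -> (4 %| wt c)%N.

(* Edges are given by a symmetric irreflexive
   relation adj (simple graph); col u v / par u v are the colour / parity
   (true = dashed) of the edge {u,v} (only meaningful when adj u v). *)
Record Adinkra (N : nat) := {
  V : finType;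
  adj : rel V;
  adj_sym : forall u v, adj u v = adj v u;
  adj_irr : forall u, ~~ adj u u;
  connected : forall u v, connect adj u v;
  boson : pred V;
  bipartite : forall u v, adj u v -> boson u != boson v;
  hgt : V -> int;
  hgt_adj : forall u v, adj u v -> (hgt u - hgt v == 1)%R || (hgt v - hgt u == 1)%R;
  col : V -> V -> 'I_N;
  col_sym : forall u v, adj u v -> col u v = col v u;
  col_one : forall (v : V) (i : 'I_N), exists! u, adj v u /\ col v u = i;
  par : V -> V -> bool;
  par_sym : forall u v, adj u v -> par u v = par v u;
  square : forall u v w, adj u v -> adj v w -> col u v != col v w ->
    exists! x, [/\ adj w x, adj x u, col w x = col u v, col x u = col v w
               & odd (par u v + par v w + par w x + par x u)]
}.

Definition is_Nk_adinkra N k (G : Adinkra N) : Prop := #|V G| = (2 ^ (N - k))%N.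

Definition e_ N (i : 'I_N) : 'rV['F_2]_N := delta_mx 0 i.

(* C is the associated code of G: up to relabelling of vertices (switching
   and heights do not affect the underlying coloured graph), G is the
   quotient of the N-cube by C: there is a surjective labelling
   p : Z_2^N -> V whose fibres are exactly the cosets of C, such that
   colour-i edges join p v and p (v + e_i). *)
Definition associated_code N (G : Adinkra N) (C : 'M['F_2]_N) : Prop :=
  exists p : 'rV['F_2]_N -> V G,
    [/\ forall x : V G, exists v, p v = x,
        forall u v, p u = p v <-> ((u - v)%R <= C)%MS
      & forall v i, adj (p v) (p (v + e_ i)%R) /\ col (p v) (p (v + e_ i)%R) = i].

Definition closed_walk N (G : Adinkra N) (x : V G) (s : seq (V G)) : bool :=
  path (@adj N G) x s && (last x s == x).

Definition walk_vector N (G : Adinkra N) (x : V G) (s : seq (V G)) : 'rV['F_2]_N :=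
  \row_i (odd (count (pred1 i) (pairmap (@col N G) x s)))%:R.

(* Main.v *)
Require Import Defs.
From mathcomp Require Import all_boot all_order all_algebra .
Set Implicit Arguments. Unset Strict Implicit. Unset Printing Implicit Defensive.
Import GRing.Theory.
Local Open Scope ring_scope.

Fixpoint walkof N (T : Type) (p : 'rV['F_2]_N -> T) (v : 'rV['F_2]_N)
  (cs : seq 'I_N) : seq T :=
  match cs with
  | [::] => [::]
  | j :: cs' => p (v + e_ j) :: walkof p (v + e_ j) cs'
  end.

Lemma natF2 (n : nat) : (n%:R : 'F_2) = (odd n)%:R.
Proof.
elim: n => [|n IH] //; rewrite -[n.+1]addn1 natrD IH /= oddD /=.
by case: (odd n); apply/val_inj.
Qed.

Lemma sum_e N (cs : seq 'I_N) :
  \sum_(j <- cs) e_ j = \row_i (odd (count (pred1 i) cs))%:R.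
Proof.
elim: cs => [|j cs IH]; first by rewrite big_nil; apply/rowP=> i; rewrite !mxE.
rewrite big_cons IH; apply/rowP=> i; rewrite !mxE /=.
by rewrite -natrD natF2 !oddD !oddb eq_sym.
Qed.

Lemma walkof_prop N (G : Adinkra N) (p : 'rV['F_2]_N -> V G) :
  (forall v i, adj (p v) (p (v + e_ i)) /\ Defs.col (p v) (p (v + e_ i)) = i) ->
  forall cs v, [/\ path (@adj N G) (p v) (walkof p v cs),
     pairmap (@Defs.col N G) (p v) (walkof p v cs) = cs &
     last (p v) (walkof p v cs) = p (v + \sum_(j <- cs) e_ j)].
Proof.
move=> Hp; elim=> [|j cs IH] v /=; first by rewrite big_nil addr0.
have [a b] := Hp v j; have [c d e] := IH (v + e_ j).
by rewrite a b c d e big_cons addrA.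
Qed.

Lemma walk_lift N (G : Adinkra N) (p : 'rV['F_2]_N -> V G) :
  (forall v i, adj (p v) (p (v + e_ i)) /\ Defs.col (p v) (p (v + e_ i)) = i) ->
  forall s v, path (@adj N G) (p v) s ->
    s = walkof p v (pairmap (@Defs.col N G) (p v) s).
Proof.
move=> Hp; elim=> [|y s IH] v //= /andP[hy hs].
have Hy : y = p (v + e_ (Defs.col (p v) y)).
  have [u [_ Hu]] := Defs.col_one (p v) (Defs.col (p v) y).
  have [a b] := Hp v (Defs.col (p v) y).
  exact: (etrans (esym (Hu y (conj hy erefl))) (Hu _ (conj a b))).
by rewrite -Hy; congr (_ :: _); rewrite {2}Hy -IH // -Hy.
Qed.

Theorem mainTheorem16 (N k : nat) (G : Adinkra N) (C : 'M['F_2]_N) :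
  is_Nk_adinkra k G -> \rank C = k -> doubly_even C -> associated_code G C ->
  (forall (x : V G) (s : seq (V G)), closed_walk x s ->
     walk_vector x s != 0%R -> (walk_vector x s <= C)%MS) /\
  (forall c : 'rV['F_2]_N, (c <= C)%MS -> c != 0%R ->
     exists (x : V G) (s : seq (V G)), closed_walk x s /\ walk_vector x s = c).
Proof.
move=> _ _ _ [p [Hs Hf Hp]]; split.
  move=> x s /andP[hp /eqP hl] _.
  have [v hv] := Hs x; subst x.
  have hs := walk_lift Hp hp.
  have [_ _ e] := walkof_prop Hp (pairmap (@Defs.col N G) (p v) s) v.
  rewrite -hs in e; rewrite e in hl.
  have := (proj1 (Hf _ _) hl); rewrite addrC addKr.
  by rewrite /walk_vector sum_e.
move=> c hc _.
set cs := [seq i <- enum 'I_N | c ord0 i != 0].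
have hsum : \sum_(j <- cs) e_ j = c.
  rewrite sum_e; apply/rowP=> i; rewrite mxE.
  rewrite (count_uniq_mem _ (filter_uniq _ (enum_uniq _))) mem_filter mem_enum andbT.
  rewrite oddb; case: (c 0 i) => [[|[|n]]] //= Hn; apply/val_inj => //=.
have [a b e] := walkof_prop Hp cs 0.
exists (p 0), (walkof p 0 cs); split.
  rewrite /closed_walk a e hsum /=; apply/eqP/Hf.
  by rewrite add0r subr0.
by rewrite /walk_vector b -sum_e.
Qed.
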